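(* Let $m,n\ge 1$ and let $D$ be the $mn\times mn$ Manhattan distance matrix of a rectangular grid with $m$ rows and $n$ columns, i.e. for $s=i+n(j-1)$ and $t=k+n(l-1)$ with $i,k\in\{1,\dots,n\}$ and $j,l\in\{1,\dots,m\}$, $d_{st}=|i-k|+|j-l|$. Then $D$ is a spherical Euclidean distance matrix of embedding dimension $n+m-2$, and the points that generate $D$ lie on a hypersphere of radius $\rho=\tfrac12(n+m-2)^{1/2}$.
   Context: An $N\times N$ matrix $D=(d_{ij})$ is a Euclidean distance matrix (EDM) if there exist points $p^1,\dots,p^N$ in some Euclidean space with $d_{ij}=\|p^i-p^j\|^2$ for all $i,j$; the dimension of their affine span is the embedding dimension $r$ of $D$. An EDM is spherical if it is generated by points lying on a hypersphere. Convention: the generating points are taken in $\mathbb{R}^r$ ($r$ the embedding dimension), and the hypersphere is a hypersphere in $\mathbb{R}^r$. *)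

(* Defs.v *)
From mathcomp Require Import all_boot all_order all_algebra.
From mathcomp Require Import reals.
Set Implicit Arguments. Unset Strict Implicit. Unset Printing Implicit Defensive.
Import Order.TTheory GRing.Theory Num.Theory.
Local Open Scope ring_scope.

Section EDM.
Variable R : realType.

Definition sqdist (k : nat) (u v : 'rV[R]_k) : R :=
  \sum_(j < k) (u 0 j - v 0 j) ^+ 2.

Definition generates (N k : nat) (p : 'I_N -> 'rV[R]_k) (D : 'M[R]_N) : Prop :=
  forall i j, D i j = sqdist (p i) (p j).

Definition affdim (N k : nat) (p : 'I_N -> 'rV[R]_k) : nat :=
  let d i j : 'rV[R]_k := p i - p j in
  \rank (\sum_(i < N) \sum_(j < N) <<d i j>>)%MS.

Definition is_EDM (N : nat) (D : 'M[R]_N) : Prop :=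
  exists k (p : 'I_N -> 'rV[R]_k), generates p D.

Definition embdim (N : nat) (D : 'M[R]_N) (r : nat) : Prop :=
  exists k (p : 'I_N -> 'rV[R]_k), generates p D /\ affdim p = r.

Definition on_sphere (N k : nat) (p : 'I_N -> 'rV[R]_k) (rad : R) : Prop :=
  exists c : 'rV[R]_k, forall i, sqdist (p i) c = rad ^+ 2.

Definition is_spherical_EDM (N : nat) (D : 'M[R]_N) : Prop :=
  exists r (p : 'I_N -> 'rV[R]_r),
    [/\ generates p D, affdim p = r & exists rad, 0 <= rad /\ on_sphere p rad].

(* Manhattan distance matrix of the m x n grid; 0-based index
   s = i + n*j with i < n (column), j < m (row), so i = s %% n, j = s %/ n *)
Definition grid_dist (m n : nat) : 'M[R]_(m * n) :=
  \matrix_(s, t) (`|(s %% n)%:R - (t %% n)%:R| + `|(s %/ n)%:R - (t %/ n)%:R|).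

End EDM.

(* Main.v *)
Require Import Defs.
From mathcomp Require Import all_boot all_order all_algebra.
From mathcomp Require Import reals.
From mathcomp Require Import ring lra zify.
Import Order.TTheory GRing.Theory Num.Theory.
Local Open Scope ring_scope.

Lemma path_sum (R : realType) (N a b : nat) : (a <= N)%N -> (b <= N)%N ->
  \sum_(0 <= c < N) (((c < a)%N%:R - (c < b)%N%:R) ^+ 2 : R) = `|a%:R - b%:R|.
Proof.
wlog ab : a b / (a <= b)%N.
  move=> H aN bN; case: (leqP a b) => h; first exact: H.
  rewrite distrC -H //; last exact: ltnW.
  by apply: eq_bigr => c _; rewrite -sqrrN opprB.
move=> aN bN.
rewrite (@big_cat_nat _ _ _ a 0 N) // (@big_cat_nat _ _ _ b a N) /=; rewrite ?(leq_trans ab bN) //.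
rewrite [X in X + _](eq_big_nat _ _ (F2 := fun _ => 0)); last first.
  by move=> c /andP[_ ca]; rewrite ca (leq_trans ca ab) subrr expr0n.
rewrite [X in _ + (_ + X)](eq_big_nat _ _ (F2 := fun _ => 0)); last first.
  move=> c /andP[bc _].
  by rewrite !ltnNge bc (leq_trans ab bc) /= subrr expr0n.
rewrite !sumr_const_nat !mul0rn add0r addr0.
rewrite (eq_big_nat _ _ (F2 := fun _ => 1)); last first.
  by move=> c /andP[ac cb]; rewrite cb ltnNge ac /= sub0r sqrrN expr1n.
rewrite distrC ger0_norm; last by rewrite subr_ge0 ler_nat.
by rewrite sumr_const_nat natrB.
Qed.

Lemma sqdist_mid (R : realType) k (x y z : 'rV[R]_k) :
  sqdist x (2^-1 *: (y + z)) =
  2^-1 * sqdist x y + 2^-1 * sqdist x z - 4^-1 * sqdist y z.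
Proof.
rewrite /sqdist !mulr_sumr -big_split -sumrB /=; apply: eq_bigr => j _.
rewrite !mxE.
by field.
Qed.
Lemma grid_sphere (R : realType) m n k (p : 'I_(m * n) -> 'rV[R]_k) :
  (0 < m)%N -> (0 < n)%N -> generates p (grid_dist R m n) ->
  on_sphere p (2^-1 * Num.sqrt ((n + m - 2)%:R)).
Proof.
move=> m0 n0 gen.
have mn0 : (0 < m * n)%N by rewrite muln_gt0 m0.
have mn1 : (m * n - 1 < m * n)%N by lia.
pose a := Ordinal mn0; pose b := Ordinal mn1.
exists (2^-1 *: (p a + p b)) => s.
rewrite sqdist_mid -!gen !mxE /=.
have hb : (m * n - 1 = (m - 1) * n + (n - 1))%N.
  have [m1 ->] : exists m1, m = m1.+1 by exists m.-1; lia.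
  rewrite mulSn; lia.
have hb1 : ((m * n - 1) %% n = n - 1)%N.
  by rewrite hb modnMDl modn_small //; lia.
have hb2 : ((m * n - 1) %/ n = m - 1)%N.
  by rewrite hb divnMDl // divn_small ?addn0 //; lia.
rewrite hb1 hb2 mod0n div0n !subr0 !sub0r !normrN !normr_nat.
have hI : (s %% n <= n - 1)%N by have := ltn_pmod s n0; lia.
have hJ : (s %/ n <= m - 1)%N.
  have : (s %/ n < m)%N by rewrite ltn_divLR // ltn_ord.
  lia.
rewrite ![`|(s %% n)%:R - _|]distrC ![`|(s %/ n)%:R - _|]distrC.
rewrite !ger0_norm ?subr_ge0 ?ler_nat //.
have -> : (n + m - 2 = (n - 1) + (m - 1))%N by lia.
rewrite exprMn sqr_sqrtr ?ler0n // natrD.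
by field.
Qed.
Definition coord (R : realType) (n s c : nat) : R :=
  (if (c < n - 1)%N then (c < s %% n)%N else (c - (n - 1) < s %/ n)%N)%:R.

Definition gridpt (R : realType) m n (s : 'I_(m * n)) : 'rV[R]_(n + m - 2) :=
  \row_(c < n + m - 2) coord R n s c.

Lemma gridpt_gen (R : realType) m n : (0 < m)%N -> (0 < n)%N ->
  generates (gridpt R m n) (grid_dist R m n).
Proof.
move=> m0 n0 s t; rewrite /sqdist !mxE.
under eq_bigr => c _ do rewrite !mxE.
rewrite -(big_mkord xpredT (fun c => (coord R n s c - coord R n t c) ^+ 2)).
rewrite (@big_cat_nat _ _ _ (n - 1)) //=; last by lia.
have hs1 : (s %% n <= n - 1)%N by have := ltn_pmod s n0; lia.
have ht1 : (t %% n <= n - 1)%N by have := ltn_pmod t n0; lia.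
have hs2 : (s %/ n <= m - 1)%N.
  have : (s %/ n < m)%N by rewrite ltn_divLR // ltn_ord.
  lia.
have ht2 : (t %/ n <= m - 1)%N.
  have : (t %/ n < m)%N by rewrite ltn_divLR // ltn_ord.
  lia.
congr (_ + _).
  rewrite -(@path_sum R (n - 1)) //; apply: eq_big_nat => c /andP[_ hc].
  by rewrite /coord hc.
have -> : \sum_(n - 1 <= c < n + m - 2) (coord R n s c - coord R n t c) ^+ 2
   = \sum_(0 <= c < (n + m - 2) - (n - 1)) (coord R n s (c + (n - 1)) - coord R n t (c + (n - 1))) ^+ 2.
  by rewrite -{1}[(n - 1)%N]add0n big_addn.
have -> : ((n + m - 2) - (n - 1) = m - 1)%N by lia.
rewrite -(@path_sum R (m - 1)) //; apply: eq_big_nat => c _.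
by rewrite /coord [(c + _ < _)%N]ltnNge leq_addl /= addnK.
Qed.

Lemma indic_diff (R : realType) (x a : nat) :
  ((x < a.+1)%N%:R - (x < a)%N%:R : R) = (x == a)%:R.
Proof.
rewrite ltnS leq_eqVlt; case: eqP => [->|_]; rewrite ?ltnn ?subr0 ?subrr //=.
Qed.

Lemma gridpt_affdim (R : realType) m n : (0 < m)%N -> (0 < n)%N ->
  affdim (gridpt R m n) = (n + m - 2)%N.
Proof.
move=> m0 n0; rewrite /affdim /=; apply/eqP; rewrite eqn_leq rank_leq_col /=.
rewrite -{1}(mxrank1 R (n + m - 2)); apply: mxrankS; apply/row_subP => c.
rewrite row1.
suff [s [t E]] : exists s t, 'e_c = gridpt R m n s - gridpt R m n t.
  rewrite E; apply: (sumsmx_sup s) => //; apply: (sumsmx_sup t) => //.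
  by rewrite genmxE.
case: (ltnP c (n - 1)) => hc.
  have h1 : (c.+1 < m * n)%N.
    have : (n <= m * n)%N by rewrite leq_pmull.
    lia.
  have h2 : (c < m * n)%N by lia.
  exists (Ordinal h1), (Ordinal h2); apply/rowP => c'; rewrite !mxE /coord /=.
  rewrite !modn_small ?divn_small //; try lia.
  case: ifP => hc'; first by rewrite indic_diff.
  rewrite subrr; case: eqP => // E; move: hc'; rewrite E hc.
  done.
have hc2 : (c - (n - 1) < m - 1)%N by have := ltn_ord c; lia.
set c2 := (c - (n - 1))%N in hc2.
have h1 : (n * c2.+1 < m * n)%N.
  rewrite mulnC ltn_pmul2r //; lia.
have h2 : (n * c2 < m * n)%N.
  rewrite mulnC ltn_pmul2r //; lia.
exists (Ordinal h1), (Ordinal h2); apply/rowP => c'; rewrite !mxE /coord /=.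
rewrite !modnMr !mulKn //.
case: ifP => hc'.
  rewrite subrr; case: eqP => // E; move: hc'; rewrite E; lia.
rewrite indic_diff; congr (_%:R).
congr (nat_of_bool _).
apply/idP/idP => /eqP E; apply/eqP; first by rewrite E.
by apply: val_inj => /=; move: hc' E; rewrite /c2; lia.
Qed.

Theorem corollary1 (R : realType) (m n : nat) :
  (0 < m)%N -> (0 < n)%N ->
  [/\ is_EDM (grid_dist R m n),
      is_spherical_EDM (grid_dist R m n),
      embdim (grid_dist R m n) (n + m - 2) &
      forall p : 'I_(m * n) -> 'rV[R]_(n + m - 2),
        generates p (grid_dist R m n) ->
        on_sphere p (2^-1 * Num.sqrt ((n + m - 2)%:R))].
Proof.
move=> m0 n0.
have G := @gridpt_gen R m n m0 n0; have A := @gridpt_affdim R m n m0 n0.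
split.
- by exists (n + m - 2)%N, (gridpt R m n).
- exists (n + m - 2)%N, (gridpt R m n); split => //.
  exists (2^-1 * Num.sqrt ((n + m - 2)%:R)); split.
    by rewrite mulr_ge0 ?sqrtr_ge0 ?invr_ge0 ?ler0n.
  exact: grid_sphere.
- by exists (n + m - 2)%N, (gridpt R m n).
- by move=> p gp; apply: grid_sphere.
Qed.
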